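(* Let $\mathcal P$ be a bloom class of continua all of whose elements are coastal. Then every $X\in\mathcal P$ is irreducible about its set of non-block points, i.e. no proper subcontinuum of $X$ contains all non-block points of $X$.
   Context: A continuum is a nondegenerate compact connected Hausdorff space. For a subcontinuum $K\subset X$, the $K$-bloom is the canonical quotient map $X\to X/K$ collapsing $K$ to a point; a class $\mathcal P$ of continua is a bloom class if $X/K\in\mathcal P$ whenever $X\in\mathcal P$ and $K$ is a subcontinuum of $X$ (with $X/K$ a continuum). $\kappa(x;p)$ denotes the union of all subcontinua $M\neq X$ of $X$ with $x\in M$ and $p\notin M$; $X$ is coastal if for every $x\in X$ some $p\neq x$ makes $\kappa(x;p)$ dense. A point $p\in X$ is a non-block point if some family of subcontinua of $X-\{p\}$ has nonempty intersection and dense union in $X$. *)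

(* Defs.v *)
From HB Require Import structures.
From mathcomp Require Import all_boot all_order.
From mathcomp Require Import generic_quotient.
From mathcomp Require Import all_classical topology.
Set Implicit Arguments. Unset Strict Implicit. Unset Printing Implicit Defensive.
Local Open Scope classical_set_scope.

Section Continua.
Context {X : topologicalType}.

Definition continuum_space : Prop :=
  [/\ compact [set: X], hausdorff_space X, connected [set: X]
    & exists x y : X, x <> y].

(* a subcontinuum: a subset which is a continuum in the subspace topology
   (Hausdorffness is inherited); nondegenerate as in the paper's convention *)
Definition subcontinuum (M : set X) : Prop :=
  [/\ compact M, connected M & exists a b, [/\ M a, M b & a <> b]].

Definition kappa (x p : X) : set X :=
  [set y | exists M : set X,
     [/\ subcontinuum M, M <> [set: X], M x, ~ M p & M y]].

Definition coastal : Prop :=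
  forall x : X, exists p : X, p <> x /\ dense (kappa x p).

Definition non_block_point (p : X) : Prop :=
  exists F : set (set X),
    [/\ (forall M, F M -> subcontinuum M /\ ~ M p),
        \bigcap_(M in F) M !=set0
      & dense (\bigcup_(M in F) M)].

Definition bloom_rel (K : set X) : rel X :=
  fun x y => `[< x = y \/ (K x /\ K y) >].

Lemma bloom_rel_refl (K : set X) : reflexive (bloom_rel K).
Proof. by move=> x; apply/asboolP; left. Qed.

Lemma bloom_rel_sym (K : set X) : symmetric (bloom_rel K).
Proof.
move=> x y; apply/idP/idP => /asboolP [->|[? ?]]; apply/asboolP; by [left|right].
Qed.

Lemma bloom_rel_trans (K : set X) : transitive (bloom_rel K).
Proof.
move=> y x z /asboolP Hxy /asboolP Hyz; apply/asboolP.
case: Hxy => [->|[Kx Ky]]; first by [].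
by case: Hyz => [<-|[_ Kz]]; right.
Qed.

Definition bloom_equiv (K : set X) : equiv_rel X :=
  EquivRel (bloom_rel K) (@bloom_rel_refl K) (@bloom_rel_sym K)
    (@bloom_rel_trans K).

Definition bloom_space (K : set X) : topologicalType :=
  quotient_topology {eq_quot (bloom_equiv K)}%qT.
End Continua.

Arguments continuum_space X : clear implicits.
Arguments coastal X : clear implicits.

Definition bloom_class (P : topologicalType -> Prop) : Prop :=
  forall (X : topologicalType), P X ->
  forall K : set X, subcontinuum K -> continuum_space (bloom_space K) ->
  P (bloom_space K).

(* Main.v *)
Require Import Defs.
From HB Require Import structures.
From mathcomp Require Import all_boot all_order.
From mathcomp Require Import generic_quotient.
From mathcomp Require Import all_classical topology.
Local Open Scope classical_set_scope.
Local Open Scope quotient_scope.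
Section S.
Context {X : topologicalType} (M : set X).
Let Q := bloom_space M.
Let q : X -> Q := \pi_Q.
Lemma qE x y : q x = q y <-> (x = y \/ (M x /\ M y)).
Proof.
split.
- move=> /eqquotP /asboolP. done.
- move=> H; apply/eqquotP/asboolP. done.
Qed.
Lemma qsurj (z : Q) : q (repr z) = z.
Proof. exact: reprK. Qed.
Definition sat (U : set X) := forall u z, U u -> M u -> M z -> U z.
Lemma pre_img U : sat U -> q @^-1` (q @` U) = U.
Proof.
move=> sU; apply/seteqP; split => z; last by move=> Uz; exists z.
by move=> [u Uu /qE [<- //|[Mu Mz]]]; apply: (sU u).
Qed.
Lemma img_open U : sat U -> open U -> open (q @` U).
Proof. move=> sU oU. change (open (q @^-1` (q @` U))). by rewrite pre_img. Qed.
Lemma q_cont : continuous q.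
Proof. exact: pi_continuous. Qed.
Lemma pre_closed (N : set Q) : closed N -> closed (q @^-1` N).
Proof.
move=> cN; rewrite -openC.
have -> : ~` (q @^-1` N) = q @^-1` (~` N) by [].
apply: ((continuousP q).1 q_cont); by rewrite openC.
Qed.
Lemma img_disj U V : sat U -> sat V -> U `&` V = set0 -> (q @` U) `&` (q @` V) = set0.
Proof.
move=> sU sV UV; apply/seteqP; split => // z [zU zV].
have : (q @^-1` (q @` U) `&` q @^-1` (q @` V)) (repr z).
  by split; rewrite /preimage /= (qsurj z).
by rewrite pre_img // pre_img // UV.
Qed.

Lemma sep_pt (hX : hausdorff_space X) (cX : compact [set: X]) (cM : closed M)
  y : ~ M y -> exists U W, [/\ open U, open W, U y, M `<=` W & U `&` W = set0].
Proof.
move=> My.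
have cy : closed [set y] by apply: accessible_closed_set1; exact: hausdorff_accessible.
have sy : set_nbhs M (~` [set y]).
  apply/set_nbhsP; exists (~` [set y]); split => //; first exact: closed_openC.
  by move=> z Mz zy; apply: My; rewrite -zy.
have [V sV clV] := compact_normal hX cX cM sy.
have [W [oW MW WV]] := (set_nbhsP M V).1 sV.
exists (~` closure V), W; split => //.
- exact/closed_openC/closed_closure.
- by move=> cVy; exact: (clV y cVy).
- apply/seteqP; split => // z [nz Wz]; apply: nz; apply: subset_closure; exact: WV.
Qed.

Lemma Q_haus (hX : hausdorff_space X) (cX : compact [set: X]) (cM : closed M) :
  hausdorff_space Q.
Proof.
rewrite open_hausdorff => a b ab.
have key : forall U V, sat U -> sat V -> open U -> open V -> U `&` V = set0 ->
    U (repr a) -> V (repr b) ->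
    exists2 AB : set Q * set Q, (a \in AB.1 /\ b \in AB.2) &
                [/\ open AB.1, open AB.2 & AB.1 `&` AB.2 == set0].
  move=> U V sU sV oU oV UV Ua Vb; exists (q @` U, q @` V) => /=.
    split; rewrite inE; [exists (repr a) => //; exact: qsurj
                        | exists (repr b) => //; exact: qsurj].
  split; [exact: img_open | exact: img_open | apply/eqP; exact: img_disj].
have neq : q (repr a) <> q (repr b) by rewrite !qsurj; exact/eqP.
have [Ma|Ma] := pselect (M (repr a)); have [Mb|Mb] := pselect (M (repr b)).
- by exfalso; apply: neq; apply/qE; right.
- have [U [W [oU oW Ub MW UW]]] := sep_pt hX cX cM _ Mb.
  apply: (key W U) => //.
  + by move=> u z _ _ Mz; exact: MW.
  + move=> u z Uu Mu _; exfalso.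
    have : (U `&` W) u by split => //; exact: MW.
    by rewrite UW.
  + by rewrite setIC.
  + exact: MW.
- have [U [W [oU oW Ua MW UW]]] := sep_pt hX cX cM _ Ma.
  apply: (key U W) => //.
  + move=> u z Uu Mu _; exfalso.
    have : (U `&` W) u by split => //; exact: MW.
    by rewrite UW.
  + by move=> u z _ _ Mz; exact: MW.
  + exact: MW.
- have rab : repr a != repr b by apply/eqP => e; apply: neq; rewrite e.
  move: hX; rewrite open_hausdorff => /(_ _ _ rab) [[U0 V0] /= [Ua Vb] [oU oV /eqP UV]].
  apply: (key (U0 `&` ~` M) (V0 `&` ~` M)).
  + by move=> u z [_ nMu] Mu; exfalso; exact: nMu.
  + by move=> u z [_ nMu] Mu; exfalso; exact: nMu.
  + by apply: openI => //; exact: closed_openC.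
  + by apply: openI => //; exact: closed_openC.
  + apply/seteqP; split => // z [[Uz _] [Vz _]].
    by have : (U0 `&` V0) z by []; rewrite UV.
  + by split => //; move: Ua; rewrite inE.
  + by split => //; move: Vb; rewrite inE.
Qed.

Lemma imgT : [set: Q] = q @` [set: X].
Proof. by apply/seteqP; split => z // _; exists (repr z) => //; exact: qsurj. Qed.

Lemma Q_cont : continuum_space X -> subcontinuum M -> ~ M `<=` set0 ->
  forall p0, ~ M p0 -> continuum_space Q.
Proof.
move=> [cX hX cnX _] [cMc _ [m1 [_ [Mm1 _ _]]]] _ p0 Mp0.
have cM := compact_closed hX cMc.
split.
- rewrite imgT; apply: continuous_compact => //; exact: continuous_subspaceT q_cont.
- exact: Q_haus.
- rewrite imgT; apply: connected_continuous_connected => //.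
  exact: continuous_subspaceT q_cont.
- exists (q m1), (q p0) => /qE [e|[_ //]].
  by apply: Mp0; rewrite -e.
Qed.

Lemma pre_subcont (cX : compact [set: X]) (hQ : hausdorff_space Q)
   (sM : subcontinuum M) m1 (Mm1 : M m1) (N : set Q) :
   subcontinuum N -> N (q m1) -> subcontinuum (q @^-1` N).
Proof.
move=> [cN cnN _] Nm.
have [_ cnM [a1 [a2 [Ma1 Ma2 a12]]]] := sM.
have MN z : M z -> N (q z).
  by move=> Mz; have -> : q z = q m1 by apply/qE; right.
have clS := pre_closed N (compact_closed hQ cN).
split.
- exact: (subclosed_compact clS cX).
- apply/connectedP => E [E0 SE sepE].
  have dE := separated_disjoint sepE.
  have cE b : closed (E b).
    move=> z cz.
    have Sz : (q @^-1` N) z.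
      have := clS z; apply; apply: (closureS _ cz).
      by rewrite SE; case: b {cz} => ? ?; [right|left].
    move: Sz; rewrite SE => -[Ez|Ez]; case: b cz => cz //; exfalso.
    + by case: sepE => _ e; have : (E false `&` closure (E true)) z by []; rewrite e.
    + by case: sepE => e _; have : (closure (E false) `&` E true) z by []; rewrite e.
  have MS : M `<=` E false `|` E true by move=> z Mz; rewrite -SE; exact: MN.
  have satE b : sat (E b).
    have [MEf|MEt] := connected_subset sepE MS cnM.
    + case: b => [u z Eu Mu _|u z _ _ Mz]; last exact: MEf.
      exfalso; have : (E false `&` E true) u by split => //; exact: MEf.
      by rewrite dE.
    + case: b => [u z _ _ Mz|u z Eu Mu _]; first exact: MEt.
      exfalso; have : (E false `&` E true) u by split => //; exact: MEt.
      by rewrite dE.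
  pose A b := q @` E b.
  have cA b : closed (A b).
    apply: (compact_closed hQ); apply: continuous_compact.
      exact: continuous_subspaceT q_cont.
    exact: (subclosed_compact (cE b) cX).
  move/connectedP: cnN => /(_ A); apply; split.
  + by move=> c; have [z Ez] := E0 c; exists (q z), z.
  + apply/seteqP; split => z.
      move=> Nz; have : (q @^-1` N) (repr z) by rewrite /preimage /= (qsurj z).
      by rewrite SE => -[Ez|Ez]; [left|right]; exists (repr z) => //; exact: qsurj.
    have sub c : A c `<=` N.
      move=> _ [u Eu <-]; have : (q @^-1` N) u by rewrite SE; case: c Eu; [right|left].
      done.
    by move=> [] H; [exact: (sub false) | exact: (sub true)].
  + have dA : A false `&` A true = set0 by apply: img_disj.
    split; [rewrite -(proj1 (closure_id _) (cA false)) | rewrite -(proj1 (closure_id _) (cA true))]; done.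
- by exists a1, a2; split => //; exact: MN.
Qed.
End S.

Theorem mainTheorem13 (P : topologicalType -> Prop) :
  (forall X : topologicalType, P X -> continuum_space X) ->
  bloom_class P ->
  (forall X : topologicalType, P X -> coastal X) ->
  forall X : topologicalType, P X ->
  forall M : set X, subcontinuum M ->
  (forall p : X, non_block_point p -> M p) ->
  M = [set: X].
Proof.
move=> Pc Pb Pco X PX M sM Mnb.
have XC := Pc X PX.
have [cX hX _ _] := XC.
have [cMc _ [m1 [m2 [Mm1 Mm2 m12]]]] := sM.
apply: contrapT => MT.
have [p0 Mp0] : exists p0, ~ M p0.
  apply: contrapT => H; apply: MT; apply/seteqP; split => // z _.
  by apply: contrapT => Mz; apply: H; exists z.
pose Q := bloom_space M.
pose q : X -> Q := \pi_Q.
have QC : continuum_space Q.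
  exact: (@Q_cont X M XC sM (fun H => H m1 Mm1) p0 Mp0).
have [_ hQ _ _] := QC.
have PQ := Pb X PX M sM QC.
have [p' [pm kd]] := Pco _ PQ (q m1).
pose p := repr p'.
have qp : q p = p' by exact: reprK.
have Mp : ~ M p.
  move=> Mp; apply: pm; rewrite -qp; apply/qE; right; split => //.
apply: Mp; apply: Mnb.
exists [set S : set X | exists N : set Q,
   [/\ subcontinuum N, N (q m1), ~ N p' & S = q @^-1` N]].
split.
- move=> S [N [sN Nm Np ->]]; split; last by move=> Hp; apply: Np; rewrite -qp.
  exact: (@pre_subcont X M cX hQ sM m1 Mm1 N sN Nm).
- by exists m1 => S [N [_ Nm _ ->]].
- move=> O [o Oo] oO.
  have [y [_ [N0 [sN0 _ Nm0 Np0 _]]]] := kd setT (ex_intro _ p' Logic.I) openT.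
  have [[z [Oz Mz]]|nOM] := pselect (exists z, O z /\ M z).
    exists z; split => //; exists (q @^-1` N0); first by exists N0.
    have e : q z = q m1 by apply/qE; right.
    by move: Nm0; rewrite -e => H; exact: H.
  have sO : sat M O.
    by move=> u z Ou Mu _; exfalso; apply: nOM; exists u.
  have [_ [[o' Oo' <-] [N [sN _ Nm Np Ny]]]] :=
    kd (q @` O) (ex_intro _ (q o) (ex_intro2 _ _ o Oo erefl)) (@img_open X M O sO oO).
  exists o'; split => //; exists (q @^-1` N) => //; by exists N.
Qed.
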